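(* For any finite simple graph $G$, $$|\operatorname{nucleus}(G)|+|\operatorname{diadem}(G)|\le 2\alpha(G)\le |\operatorname{core}(G)|+|\operatorname{corona}(G)|.$$
   Context: For $X\subseteq V(G)$, $N(X)$ is the set of vertices adjacent to some vertex of $X$, and $d(X)=|X|-|N(X)|$. An independent set $S$ is critical if $d(S)=\max\{d(X):X\subseteq V(G)\}$; the empty set may be critical. A maximum critical independent set is a critical independent set of maximum cardinality. $\operatorname{nucleus}(G)$ and $\operatorname{diadem}(G)$ are, respectively, the intersection and the union of all maximum critical independent sets. $\alpha(G)$ is the independence number. $\operatorname{core}(G)$ and $\operatorname{corona}(G)$ are, respectively, the intersection and the union of all maximum independent sets of $G$. *)

(* Defs.v *)
From mathcomp Require Import all_boot all_order all_algebra.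
Set Implicit Arguments. Unset Strict Implicit. Unset Printing Implicit Defensive.
Import GRing.Theory Num.Theory.

Definition simple_graph (T : finType) (e : rel T) : Prop :=
  symmetric e /\ irreflexive e.

Section Defs.
Variables (T : finType) (e : rel T).

Definition nbhd (X : {set T}) : {set T} := [set y | [exists x in X, e x y]].

Definition dif (X : {set T}) : int := (#|X|%:Z - #|nbhd X|%:Z)%R.

Definition independent (S : {set T}) : bool :=
  [forall x in S, forall y in S, ~~ e x y].

Definition critical (S : {set T}) : bool :=
  [forall X : {set T}, (dif X <= dif S)%R].

Definition critical_independent (S : {set T}) : bool :=
  independent S && critical S.

Definition max_critical_independent (S : {set T}) : bool :=
  critical_independent S &&
  [forall X : {set T}, critical_independent X ==> (#|X| <= #|S|)].

Definition maximum_independent (S : {set T}) : bool :=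
  independent S && [forall X : {set T}, independent X ==> (#|X| <= #|S|)].

Definition alpha : nat := \max_(S : {set T} | independent S) #|S|.

Definition nucleus : {set T} :=
  [set x | [forall S : {set T}, max_critical_independent S ==> (x \in S)]].
Definition diadem : {set T} :=
  [set x | [exists S : {set T}, max_critical_independent S && (x \in S)]].
Definition core : {set T} :=
  [set x | [forall S : {set T}, maximum_independent S ==> (x \in S)]].
Definition corona : {set T} :=
  [set x | [exists S : {set T}, maximum_independent S && (x \in S)]].

End Defs.

(* Main.v *)
Require Import Defs.
From mathcomp Require Import all_boot all_order all_algebra.
From mathcomp Require Import zify.
Set Implicit Arguments. Unset Strict Implicit. Unset Printing Implicit Defensive.

Lemma in_nbhd (T : finType) (e : rel T) (X : {set T}) y :
  reflect (exists2 x, x \in X & e x y) (y \in nbhd e X).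
Proof. rewrite inE; exact: (iffP exists_inP). Qed.

Lemma indepP (T : finType) (e : rel T) (S : {set T}) :
  reflect (forall x y, x \in S -> y \in S -> ~~ e x y) (independent e S).
Proof.
apply: (iffP forallP) => [H x y xS yS | H x].
  by move/forall_inP: (implyP (H x) xS) => /(_ y yS).
by apply/implyP => xS; apply/forall_inP => y yS; apply: H.
Qed.

Lemma dif_le (a b c d : nat) :
  (a%:Z - b%:Z <= c%:Z - d%:Z)%R -> (a + d <= c + b)%N.
Proof. move=> H. lia. Qed.

Lemma nbhdU (T : finType) (e : rel T) (A B : {set T}) :
  nbhd e (A :|: B) = nbhd e A :|: nbhd e B.
Proof.
apply/setP => y; rewrite in_setU; apply/idP/idP.
  case/in_nbhd => x; rewrite inE => /orP[] xA exy; apply/orP; [left|right];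
    by apply/in_nbhd; exists x.
case/orP => /in_nbhd[x xA exy]; apply/in_nbhd; exists x => //; by rewrite inE xA ?orbT.
Qed.

Lemma nbhdS (T : finType) (e : rel T) (A B : {set T}) :
  A \subset B -> nbhd e A \subset nbhd e B.
Proof.
move=> sAB; apply/subsetP => y /in_nbhd[x xA exy]; apply/in_nbhd.
by exists x => //; apply: (subsetP sAB).
Qed.

Lemma dif_ge (a b c d : nat) :
  (a + d <= c + b)%N -> (a%:Z - b%:Z <= c%:Z - d%:Z)%R.
Proof. move=> H. lia. Qed.

Lemma crit_le (T : finType) (e : rel T) (A X : {set T}) :
  critical e A -> (dif e X <= dif e A)%R.
Proof. by move/forallP. Qed.

Lemma critU (T : finType) (e : rel T) (A B : {set T}) :
  critical e A -> critical e B -> critical e (A :|: B).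
Proof.
move=> cA cB; apply/forallP => X.
apply: (Order.POrderTheory.le_trans (crit_le X cA)).
have h1 := cardsUI A B.
have h2 := cardsUI (nbhd e A) (nbhd e B).
rewrite -nbhdU in h2.
have h3 : #|nbhd e (A :&: B)| <= #|nbhd e A :&: nbhd e B|.
  by apply: subset_leq_card; rewrite subsetI !nbhdS // ?subsetIl ?subsetIr.
have h4 := dif_le (crit_le (A :&: B) cB).
apply: dif_ge. lia.
Qed.

Lemma crit_core (T : finType) (e : rel T) (X : {set T}) :
  symmetric e -> critical e X -> critical e (X :\: nbhd e X).
Proof.
move=> sym cX; apply/forallP => Z.
apply: (Order.POrderTheory.le_trans (crit_le Z cX)).
have h1 := cardsID (nbhd e X) X.
have h2 := cardsID X (nbhd e X).
have h3 : #|nbhd e (X :\: nbhd e X)| <= #|nbhd e X :\: X|.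
  apply: subset_leq_card; apply/subsetP => y /in_nbhd[x].
  rewrite inE => /andP[xN xX] exy; rewrite inE; apply/andP; split.
    apply/negP => yX; case/negP: xN; apply/in_nbhd; exists y => //.
    by rewrite sym.
  by apply/in_nbhd; exists x.
rewrite setIC in h2. apply: dif_ge. lia.
Qed.

Lemma core_indep (T : finType) (e : rel T) (X : {set T}) :
  independent e (X :\: nbhd e X).
Proof.
apply/indepP => x y; rewrite !in_setD => /andP[_ xX] /andP[yN _].
by apply/negP => exy; case/negP: yN; apply/in_nbhd; exists x.
Qed.

Lemma crit_ex (T : finType) (e : rel T) : exists X, critical e X.
Proof.
case: (@Order.TotalTheory.arg_maxP _ _ {set T} set0 xpredT (dif e) erefl) => X _ H.
by exists X; apply/forallP => Y; apply: H.
Qed.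

Lemma mci_ex (T : finType) (e : rel T) :
  symmetric e -> exists S, max_critical_independent e S.
Proof.
move=> sym; case: (crit_ex e) => X cX.
have H0 : critical_independent e (X :\: nbhd e X).
  by rewrite /critical_independent core_indep crit_core.
case: (arg_maxnP (fun S : {set T} => #|S|) H0) => S HS Hmax.
exists S; rewrite /max_critical_independent HS /=.
by apply/forallP => Y; apply/implyP => HY; apply: Hmax.
Qed.

Lemma mciP (T : finType) (e : rel T) (S : {set T}) :
  max_critical_independent e S ->
  [/\ independent e S, critical e S &
      forall X, independent e X -> critical e X -> #|X| <= #|S|].
Proof.
case/andP => /andP[iS cS] /forallP H; split => // X iX cX.
by move/implyP: (H X); apply; rewrite /critical_independent iX.
Qed.

Lemma hall_crit (T : finType) (e : rel T) (S B : {set T}) :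
  symmetric e -> critical e S -> B \subset nbhd e S ->
  #|B| <= #|S :&: nbhd e B|.
Proof.
move=> sym cS sB.
set S' := S :\: nbhd e B.
have h1 := cardsID (nbhd e B) S.
have h2 := cardsID B (nbhd e S).
have eB : nbhd e S :&: B = B by apply/setIidPr.
rewrite eB in h2.
have h3 : #|nbhd e S'| <= #|nbhd e S :\: B|.
  apply: subset_leq_card; apply/subsetP => y /in_nbhd[x].
  rewrite /S' in_setD => /andP[xN xS] exy; rewrite in_setD; apply/andP; split.
    apply/negP => yB; case/negP: xN; apply/in_nbhd; exists y => //.
    by rewrite sym.
  by apply/in_nbhd; exists x.
have h4 := dif_le (crit_le S' cS).
rewrite /S' in h3 h4. lia.
Qed.

Lemma mci_nbhd (T : finType) (e : rel T) (S0 S1 : {set T}) v :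
  simple_graph e -> max_critical_independent e S0 ->
  max_critical_independent e S1 -> v \in S1 -> v \notin S0 ->
  v \in nbhd e S0.
Proof.
move=> [sym irr] /mciP[i0 c0 m0] /mciP[i1 c1 _] vS1 vS0.
apply/negPn/negP => vN.
set X := S0 :|: S1.
have cX : critical e X by apply: critU.
set Y := X :\: nbhd e X.
have cY : critical e Y by apply: crit_core.
have cT : critical e (S0 :|: Y) by apply: critU.
have iT : independent e (S0 :|: Y).
  apply/indepP => x y; rewrite !in_setU => /orP[xS|xY] /orP[yS|yY].
  - exact: (indepP _ _ i0).
  - apply/negP => exy; move: yY; rewrite /Y in_setD => /andP[/negP yN _].
    by apply: yN; apply/in_nbhd; exists x => //; rewrite /X in_setU xS.
  - apply/negP => exy; move: xY; rewrite /Y in_setD => /andP[/negP xN _].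
    by apply: xN; apply/in_nbhd; exists y; rewrite /X ?in_setU ?yS // sym.
  - exact: (indepP _ _ (core_indep e X)).
have hle := m0 _ iT cT.
have sub : S0 \subset S0 :|: Y by apply: subsetUl.
have eqT : S0 = S0 :|: Y.
  by apply/eqP; rewrite eqEcard sub hle.
have vY : v \in Y.
  rewrite /Y in_setD /X in_setU vS1 orbT andbT nbhdU in_setU negb_or vN /=.
  apply/negP => /in_nbhd[x xS1 exv].
  by move: (indepP _ _ i1 x v xS1 vS1); rewrite exv.
by move: vS0; rewrite eqT in_setU vY orbT.
Qed.

Lemma indep_alpha (T : finType) (e : rel T) (S : {set T}) :
  independent e S -> #|S| <= alpha e.
Proof. move=> iS; rewrite /alpha; exact: (@leq_bigmax_cond _ (independent e) (fun S : {set T} => #|S|) S iS). Qed.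

Lemma part1 (T : finType) (e : rel T) :
  simple_graph e -> #|nucleus e| + #|diadem e| <= 2 * alpha e.
Proof.
move=> G; have [sym irr] := G.
case: (mci_ex sym) => S0 m0.
have [i0 c0 _] := mciP m0.
have a0 := indep_alpha i0.
have nS : nucleus e \subset S0.
  by apply/subsetP => x; rewrite inE => /forallP /(_ S0) /implyP; apply.
have Sd : S0 \subset diadem e.
  by apply/subsetP => x xS; rewrite inE; apply/existsP; exists S0; rewrite m0.
set B := diadem e :\: S0.
have sB : B \subset nbhd e S0.
  apply/subsetP => v; rewrite /B in_setD => /andP[vS0 /[dup] vD].
  rewrite inE => /existsP[S1 /andP[m1 vS1]].
  exact: (mci_nbhd G m0 m1 vS1 vS0).
have hB := hall_crit sym c0 sB.
have h1 : #|S0 :&: nbhd e B| <= #|S0 :\: nucleus e|.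
  apply: subset_leq_card; apply/subsetP => y; rewrite in_setI => /andP[yS yN].
  rewrite in_setD yS andbT; apply/negP => yn.
  case/in_nbhd: yN => b; rewrite /B in_setD => /andP[_].
  rewrite inE => /existsP[S1 /andP[m1 bS1]] eby.
  have yS1 : y \in S1 by move: yn; rewrite inE => /forallP /(_ S1) /implyP; apply.
  have [i1 _ _] := mciP m1.
  by move: (indepP _ _ i1 b y bS1 yS1); rewrite eby.
have h2 := cardsID (nucleus e) S0.
have h3 := cardsID S0 (diadem e).
rewrite (setIidPr nS) in h2.
rewrite (setIidPr Sd) in h3.
rewrite -/B in h3.
lia.
Qed.

Lemma miP (T : finType) (e : rel T) (S : {set T}) :
  maximum_independent e S ->
  independent e S /\ forall X, independent e X -> #|X| <= #|S|.
Proof.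
case/andP => iS /forallP H; split => // X iX.
by move/implyP: (H X); apply.
Qed.

Lemma hall_max (T : finType) (e : rel T) (S B : {set T}) :
  symmetric e -> maximum_independent e S -> independent e B ->
  B :&: S = set0 -> #|B| <= #|S :&: nbhd e B|.
Proof.
move=> sym /miP[iS mS] iB dBS.
set T' := (S :\: nbhd e B) :|: B.
have iT : independent e T'.
  apply/indepP => x y; rewrite /T' !in_setU !in_setD.
  move=> /orP[/andP[xN xS]|xB] /orP[/andP[yN yS]|yB].
  - exact: (indepP _ _ iS).
  - by apply/negP => exy; case/negP: xN; apply/in_nbhd; exists y; rewrite // sym.
  - by apply/negP => exy; case/negP: yN; apply/in_nbhd; exists x.
  - exact: (indepP _ _ iB).
have h := mS _ iT.
have h1 := cardsUI (S :\: nbhd e B) B.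
have h0 : (S :\: nbhd e B) :&: B = set0.
  apply/setP => x; rewrite !inE.
  apply/negP => /andP[/andP[_ xS] xB].
  by move/setP: dBS => /(_ x); rewrite !inE xB xS.
rewrite h0 cards0 in h1.
have h2 := cardsID (nbhd e B) S.
rewrite /T' in h. lia.
Qed.

Definition Iset (T : finType) (A0 : {set T}) (s : seq {set T}) : {set T} :=
  [set x in A0 | all (fun S : {set T} => x \in S) s].
Definition Uset (T : finType) (A0 : {set T}) (s : seq {set T}) : {set T} :=
  [set x | (x \in A0) || has (fun S : {set T} => x \in S) s].

Lemma part2_ind (T : finType) (e : rel T) (A0 : {set T}) (s : seq {set T}) :
  symmetric e -> maximum_independent e A0 -> all (maximum_independent e) s ->
  2 * #|A0| <= #|Iset A0 s| + #|Uset A0 s|.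
Proof.
move=> sym mA0; have [iA0 _] := miP mA0.
elim: s => [|S s IH].
  move=> _; have -> : Iset A0 [::] = A0 by apply/setP => x; rewrite !inE andbT.
  have -> : Uset A0 [::] = A0 by apply/setP => x; rewrite !inE orbF.
  lia.
rewrite /= => /andP[mS ms]; have {}IH := IH ms.
have -> : Iset A0 (S :: s) = Iset A0 s :&: S.
  by apply/setP => x; rewrite !inE /=; case: (x \in S); rewrite ?andbT ?andbF.
have -> : Uset A0 (S :: s) = Uset A0 s :|: S.
  by apply/setP => x; rewrite !inE /=; case: (x \in S); rewrite ?orbT ?orbF.
set I := Iset A0 s; set U := Uset A0 s.
have iB : independent e (I :\: S).
  apply/indepP => x y; rewrite !inE => /andP[_ /andP[xA _]] /andP[_ /andP[yA _]].
  exact: (indepP _ _ iA0).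
have dB : (I :\: S) :&: S = set0.
  by apply/setP => x; rewrite !inE; case: (x \in S); rewrite ?andbF.
have hB := hall_max sym mS iB dB.
have h1 : #|S :&: nbhd e (I :\: S)| <= #|S :\: U|.
  apply: subset_leq_card; apply/subsetP => y; rewrite in_setI => /andP[yS yN].
  rewrite in_setD yS andbT; apply/negP.
  case/in_nbhd: yN => b; rewrite in_setD => /andP[_].
  rewrite !inE => /andP[bA /allP ball] eby /orP[yA|/hasP[S' S's yS']].
    by move: (indepP _ _ iA0 b y bA yA); rewrite eby.
  have [iS' _] := miP (allP ms S' S's).
  by move: (indepP _ _ iS' b y (ball S' S's) yS'); rewrite eby.
have h2 := cardsID S I.
have h3 := cardsID U S.
have h4 := cardsUI U S.
rewrite setIC in h4.
rewrite -/I -/U in IH. lia.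
Qed.

Lemma part2 (T : finType) (e : rel T) :
  simple_graph e -> 2 * alpha e <= #|core e| + #|corona e|.
Proof.
move=> [sym irr].
have i0 : independent e (set0 : {set T}) by apply/indepP => x y; rewrite in_set0.
case: (arg_maxnP (fun S : {set T} => #|S|) i0) => A0 iA0 HA0.
have mA0 : maximum_independent e A0.
  by rewrite /maximum_independent iA0; apply/forallP => X; apply/implyP => /HA0.
have eA : alpha e = #|A0|.
  apply/eqP; rewrite eqn_leq indep_alpha // andbT.
  by apply/bigmax_leqP => S /HA0.
set s := enum (maximum_independent e).
have ms : all (maximum_independent e) s by apply/allP => S; rewrite mem_enum.
have -> : core e = Iset A0 s.
  apply/setP => x; rewrite !inE; apply/idP/idP.
    move/forallP => H; rewrite (implyP (H A0) mA0) /=.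
    by apply/allP => S; rewrite mem_enum => /(implyP (H S)).
  case/andP => _ /allP H; apply/forallP => S; apply/implyP => mS.
  by apply: H; rewrite mem_enum.
have -> : corona e = Uset A0 s.
  apply/setP => x; rewrite !inE; apply/idP/idP.
    case/existsP => S /andP[mS xS]; apply/orP; right.
    by apply/hasP; exists S; rewrite ?mem_enum.
  case/orP => [xA|/hasP[S]].
    by apply/existsP; exists A0; rewrite mA0.
  by rewrite mem_enum => mS xS; apply/existsP; exists S; rewrite xS andbT; exact: mS.
rewrite eA; exact: part2_ind.
Qed.

Theorem corollary4p1 (T : finType) (e : rel T) :
  simple_graph e ->
  (#|nucleus e| + #|diadem e| <= 2 * alpha e)%N /\
  (2 * alpha e <= #|core e| + #|corona e|)%N.
Proof. by move=> G; split; [apply: part1 | apply: part2]. Qed.
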